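(* With the notation of the context, let $\Sigma:=\sum_{j\in A}\sigma_j$. Then $\Sigma=\frac{|A|}{|G|^k}\sum_{x\in A^k}\sum_{w\in A}\eta^x_w\,|x,S^x_w\rangle\langle x,S^x_w|$, each $\sigma_d$ is a density operator, the pretty good measurement operators $\Sigma^{-1/2}\sigma_j\Sigma^{-1/2}$ (inverse on the support of $\Sigma$) equal $$E_j=\frac{1}{|A|}\sum_{x\in A^k}\sum_{w,v\in A}\chi_w(j)\overline{\chi_v(j)}\,|x,S^x_w\rangle\langle x,S^x_v|,$$ and for every $d\in A$, $$\mathrm{tr}(E_d\sigma_d)=\frac{p}{|G|^{k+1}}\sum_{x\in A^k}\Big(\sum_{w\in A}\sqrt{\eta^x_w}\Big)^2 .$$
   Context: $A$ finite abelian group, $p$ prime, $\varphi\in\mathrm{Aut}(A)$ with $\varphi^p=\mathrm{id}$, $|G|:=p|A|$, $k\ge1$. $\{\chi_x\}_{x\in A}$ are the characters of $A$ indexed so that $\chi_x\chi_{x'}=\chi_{x+x'}$ and $\chi_x(y)=\chi_y(x)$. For $b\in\mathbb{Z}_p$ (identified with $\{0,\dots,p-1\}$) let $\Phi_b:=\sum_{i=0}^{b-1}\varphi^i$ and let $\hat\Phi_b:A\to A$ be a function with $\chi_x(\Phi_b(d))=\chi_{\hat\Phi_b(x)}(d)$ for all $x,d\in A$. For $x\in A^k$, $b\in\mathbb{Z}_p^k$ put $\hat\Phi_b(x):=\sum_{j=1}^k\hat\Phi_{b_j}(x_j)$; $S^x_w:=\{b\in\mathbb{Z}_p^k:\hat\Phi_b(x)=w\}$,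 $\eta^x_w:=|S^x_w|$, $|S^x_w\rangle:=\eta_w^{x\,-1/2}\sum_{b\in S^x_w}|b\rangle$ (and $|S^x_w\rangle:=0$ if $\eta^x_w=0$), vectors in $\mathbb{C}^{A^k}\otimes\mathbb{C}^{\mathbb{Z}_p^k}$. For $d\in A$ define $\sigma_d:=\frac{1}{|G|^k}\sum_{x\in A^k}\sum_{w,v\in A}\chi_w(d)\overline{\chi_v(d)}\sqrt{\eta^x_w\eta^x_v}\,|x,S^x_w\rangle\langle x,S^x_v|$ (this is the Fourier-transformed $k$-copy hidden subgroup state for $\langle(d,1)\rangle$). *)

(* Defs.v *)
From HB Require Import structures.
From mathcomp Require Import all_boot all_order all_algebra algC.
Set Implicit Arguments.
Unset Strict Implicit.
Unset Printing Implicit Defensive.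
Import Order.TTheory GRing.Theory Num.Theory Num.Def.
Local Open Scope ring_scope.

Definition adjmx (m n : nat) (M : 'M[algC]_(m, n)) : 'M[algC]_(n, m) :=
  (map_mx conjC M)^T.

Definition psdmx (n : nat) (M : 'M[algC]_n) : Prop :=
  adjmx M = M /\ forall u : 'cV[algC]_n, 0 <= (adjmx u *m M *m u) 0 0.

Definition density_op (n : nat) (M : 'M[algC]_n) : Prop :=
  psdmx M /\ \tr M = 1.

(* Sigma^{-1/2}, inverse on the support, via the spectral decomposition
   S = P^{-1} diag(D) P (P unitary) of the normal matrix S. *)
Definition inv_sqrt_supp (z : algC) : algC :=
  if z == 0 then 0 else (sqrtC z)^-1.
Definition pinv_sqrtmx (n : nat) (S : 'M[algC]_n) : 'M[algC]_n :=
  invmx (spectralmx S) *m diag_mx (map_mx inv_sqrt_supp (spectral_diag S))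
    *m spectralmx S.

(* The Hilbert space C^{A^k} (x) C^{Z_p^k} is indexed by this finite type;
   Z_p is represented by 'I_p = {0,...,p-1}. *)
Definition Idx (A : finZmodType) (p k : nat) : finType :=
  ({ffun 'I_k -> A} * {ffun 'I_k -> 'I_p})%type.

Definition Phi (A : finZmodType) (phi : A -> A) (b : nat) (d : A) : A :=
  \sum_(i < b) iter i phi d.

Definition hatPhiT (A : finZmodType) (p k : nat) (hatPhi : 'I_p -> A -> A)
    (x : {ffun 'I_k -> A}) (b : {ffun 'I_k -> 'I_p}) : A :=
  \sum_(j < k) hatPhi (b j) (x j).

Definition Sset (A : finZmodType) (p k : nat) (hatPhi : 'I_p -> A -> A)
    (x : {ffun 'I_k -> A}) (w : A) : {set {ffun 'I_k -> 'I_p}} :=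
  [set b | hatPhiT hatPhi x b == w].

Definition etaS (A : finZmodType) (p k : nat) (hatPhi : 'I_p -> A -> A)
    (x : {ffun 'I_k -> A}) (w : A) : nat :=
  #|Sset hatPhi x w|.

(* |x, S^x_w> ; it is 0 when etaS^x_w = 0 (empty S^x_w) *)
Definition ketS (A : finZmodType) (p k : nat) (hatPhi : 'I_p -> A -> A)
    (x : {ffun 'I_k -> A}) (w : A) : 'cV[algC]_#|Idx A p k| :=
  \col_i (let t := @enum_val (Idx A p k) predT i in
          if (t.1 == x) && (t.2 \in Sset hatPhi x w)
          then (sqrtC (etaS hatPhi x w)%:R)^-1 else 0).

Definition ordG (A : finZmodType) (p : nat) : nat := (p * #|A|)%N.

Definition sigma (A : finZmodType) (p k : nat) (chi : A -> A -> algC)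
    (hatPhi : 'I_p -> A -> A) (d : A) : 'M[algC]_#|Idx A p k| :=
  ((ordG A p ^ k)%:R)^-1 *:
  \sum_(x : {ffun 'I_k -> A}) \sum_(w : A) \sum_(v : A)
     (chi w d * (chi v d)^* *
      sqrtC ((etaS hatPhi x w * etaS hatPhi x v)%N)%:R) *:
     (ketS hatPhi x w *m adjmx (ketS hatPhi x v)).

Definition Sigma (A : finZmodType) (p k : nat) (chi : A -> A -> algC)
    (hatPhi : 'I_p -> A -> A) : 'M[algC]_#|Idx A p k| :=
  \sum_(j : A) sigma k chi hatPhi j.

Definition Emeas (A : finZmodType) (p k : nat) (chi : A -> A -> algC)
    (hatPhi : 'I_p -> A -> A) (j : A) : 'M[algC]_#|Idx A p k| :=
  (#|A|%:R)^-1 *: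
  \sum_(x : {ffun 'I_k -> A}) \sum_(w : A) \sum_(v : A)
     (chi w j * (chi v j)^*) *:
     (ketS hatPhi x w *m adjmx (ketS hatPhi x v)).

Definition is_character (A : finZmodType) (f : A -> algC) : Prop :=
  (forall y z, f (y + z) = f y * f z) /\ (forall y, f y != 0).

Arguments Phi {A} phi b d.
Arguments hatPhiT {A p k} hatPhi x b.
Arguments Sset {A p k} hatPhi x w.
Arguments etaS {A p k} hatPhi x w.
Arguments ketS {A p k} hatPhi x w.
Arguments sigma {A p} k chi hatPhi d.
Arguments Sigma {A p} k chi hatPhi.
Arguments Emeas {A p} k chi hatPhi j.
Arguments is_character {A} f.

(* Main.v *)
Require Import Defs.
From HB Require Import structures.
From mathcomp Require Import all_boot all_order all_algebra algC.
From mathcomp Require Import ring.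
Import Order.TTheory GRing.Theory Num.Theory Num.Def.
Local Open Scope ring_scope.
Set Implicit Arguments.
Unset Strict Implicit.

Lemma adjmxD m n (M N : 'M[algC]_(m,n)) : adjmx (M + N) = adjmx M + adjmx N.
Proof. by apply/matrixP=> i j; rewrite !mxE rmorphD. Qed.
Lemma adjmxZ m n a (M : 'M[algC]_(m,n)) : adjmx (a *: M) = a^* *: adjmx M.
Proof. by apply/matrixP=> i j; rewrite !mxE rmorphM. Qed.
Lemma adjmx0 m n : adjmx (0 : 'M[algC]_(m,n)) = 0.
Proof. by apply/matrixP=> i j; rewrite !mxE rmorph0. Qed.
Lemma adjmx_sum m n (I : finType) (F : I -> 'M[algC]_(m,n)) :
  adjmx (\sum_i F i) = \sum_i adjmx (F i).
Proof. by elim/big_rec2: _ => [|i a b _ <-]; rewrite ?adjmx0 ?adjmxD. Qed.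
Lemma adjmxM m n l (M : 'M[algC]_(m,n)) (N : 'M[algC]_(n,l)) :
  adjmx (M *m N) = adjmx N *m adjmx M.
Proof. by rewrite /adjmx map_mxM trmx_mul. Qed.
Lemma adjmxK m n (M : 'M[algC]_(m,n)) : adjmx (adjmx M) = M.
Proof. by apply/matrixP=> i j; rewrite !mxE conjCK. Qed.
Lemma adjmx11 (M : 'M[algC]_1) : adjmx M = (M 0 0)^*%:M.
Proof. by apply/matrixP=> i j; rewrite !ord1 !mxE /= mulr1n. Qed.


Section Family.
Variables (n : nat) (I : finType) (e : I -> 'cV[algC]_n) (nz : I -> bool).
Hypothesis ortho : forall a b,
  adjmx (e a) *m e b = (if a == b then (nz a)%:R else 0)%:M.
Hypothesis nze : forall a, ~~ nz a -> e a = 0.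

Definition fam (h : I -> algC) := \sum_a h a *: (e a *m adjmx (e a)).

Lemma fam_e h b : fam h *m e b = h b *: e b.
Proof.
rewrite /fam mulmx_suml (bigD1 b) //= big1 ?addr0.
  rewrite -scalemxAl -mulmxA ortho eqxx.
  case: (boolP (nz b)) => hb; last by rewrite nze // ?mul0mx ?mulmx0 !scaler0.
  by rewrite mul_mx_scalar scale1r.
by move=> a /negbTE ab; rewrite -scalemxAl -mulmxA ortho ab mul_mx_scalar !scale0r scaler0.
Qed.

Lemma fam_adj h : (forall a, h a \is Num.real) -> adjmx (fam h) = fam h.
Proof.
move=> hr; rewrite /fam adjmx_sum; apply: eq_bigr => a _.
by rewrite adjmxZ adjmxM adjmxK conj_Creal.
Qed.

Lemma fam_row (lam : I -> algC) (f : algC -> algC) (f0 : f 0 = 0)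
  (r : 'rV[algC]_n) mu :
  r *m fam lam = mu *: r -> r *m fam (fun a => f (lam a)) = f mu *: r.
Proof.
move=> rS.
have key : forall b, (r *m e b == 0) || (mu == lam b).
  move=> b; have := congr1 (mulmx^~ (e b)) rS; rewrite -mulmxA fam_e.
  rewrite -scalemxAr -scalemxAl => /eqP; rewrite -subr_eq0 -scalerBl scaler_eq0.
  by rewrite subr_eq0 orbC [lam b == _]eq_sym.
have sub : forall g : algC -> algC,
    r *m fam (fun a => g (lam a)) = g mu *: \sum_b r *m (e b *m adjmx (e b)).
  move=> g; rewrite /fam mulmx_sumr scaler_sumr; apply: eq_bigr => b _.
  rewrite -scalemxAr; have /orP[/eqP z|/eqP ->] := key b; last by [].
  by rewrite mulmxA z !mul0mx !scaler0.
rewrite sub; have [->|mu0] := eqVneq mu 0; first by rewrite f0 !scale0r.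
congr (_ *: _).
have := sub id; rewrite (_ : fam (fun a => id (lam a)) = fam lam) // rS.
by move/(scalerI mu0).
Qed.

Lemma fam_pinv (lam : I -> algC) (lam_real : forall a, lam a \is Num.real)
  (f : algC -> algC) (f0 : f 0 = 0) :
  invmx (spectralmx (fam lam)) *m diag_mx (map_mx f (spectral_diag (fam lam)))
    *m spectralmx (fam lam) = fam (fun a => f (lam a)).
Proof.
set S := fam lam; set P := spectralmx S; set D := spectral_diag S.
have Sn : S \is normalmx.
  apply/normalmxP.
  have -> : (S ^t* )%sesqui = S.
    by rewrite -map_trmx -[RHS]fam_adj.
  by [].
have SE := orthomx_spectralP Sn.
have PU : P \in unitmx by exact: spectral_unit.
have PS : P *m S = diag_mx D *m P.
  by rewrite {1}SE /P !mulmxA mulmxV // mul1mx.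
have PX : P *m fam (fun a => f (lam a)) = diag_mx (map_mx f D) *m P.
  apply/row_matrixP => i.
  rewrite row_mul (row_mul i (diag_mx _)) row_diag_mx -scalemxAl -rowE mxE.
  apply: fam_row => //.
  by rewrite -row_mul PS row_mul row_diag_mx -scalemxAl -rowE.
by rewrite -mulmxA -PX mulmxA mulVmx // mul1mx.
Qed.

End Family.


Section Ket.
Variables (A : finZmodType) (p k : nat) (hatPhi : 'I_p -> A -> A).

Lemma ket_eq0 (x : {ffun 'I_k -> A}) (w : A) : etaS hatPhi x w = 0%N -> ketS hatPhi x w = 0.
Proof.
move=> /eqP; rewrite /etaS cards_eq0 => /eqP S0.
by apply/matrixP => i j; rewrite !mxE S0 /= in_set0 andbF.
Qed.

Lemma ket_ortho (a b : ({ffun 'I_k -> A} * A)%type) :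
  adjmx (ketS hatPhi a.1 a.2) *m ketS hatPhi b.1 b.2 =
  (if a == b then (etaS hatPhi a.1 a.2 != 0%N)%:R else 0)%:M.
Proof.
apply/matrixP => i j; rewrite !ord1 !mxE /= mulr1n.
rewrite (eq_bigr (fun i0 => let t := @enum_val (Idx A p k) predT i0 in
   ((if (t.1 == a.1) && (t.2 \in Sset hatPhi a.1 a.2)
    then (sqrtC (etaS hatPhi a.1 a.2)%:R)^-1 else 0)^* *
   (if (t.1 == b.1) && (t.2 \in Sset hatPhi b.1 b.2)
    then (sqrtC (etaS hatPhi b.1 b.2)%:R)^-1 else 0)))); last first.
  by move=> i0 _; rewrite !mxE.
rewrite -(big_enum_val (fun t : Idx A p k => 
   ((if (t.1 == a.1) && (t.2 \in Sset hatPhi a.1 a.2)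
    then (sqrtC (etaS hatPhi a.1 a.2)%:R)^-1 else 0)^* *
   (if (t.1 == b.1) && (t.2 \in Sset hatPhi b.1 b.2)
    then (sqrtC (etaS hatPhi b.1 b.2)%:R)^-1 else 0)))) /=.
set c := (sqrtC (etaS hatPhi a.1 a.2)%:R)^-1.
case: eqP => [<-|ab].
  rewrite -/c.
  have cr : c^* = c.
    by apply: conj_Creal; rewrite /c rpredV sqrtC_real // ler0n.
  under eq_bigr => t _ do rewrite (fun_if conjC) rmorph0 cr.
  transitivity (\sum_(x0 : {ffun 'I_k -> A}) \sum_(b0 : {ffun 'I_k -> 'I_p})
     (if (x0 == a.1) && (b0 \in Sset hatPhi a.1 a.2) then c * c else 0)).
    rewrite pair_bigA; apply: eq_bigr => t _ /=.
    by case: ifP; rewrite ?mulr0.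
  rewrite (bigD1 a.1) //= [X in _ + X]big1 => [|x0 /negbTE h]; last first.
    by rewrite big1 // => b0 _; rewrite h.
  rewrite addr0 eqxx /= -big_mkcond /= sumr_const.
  rewrite -/(etaS hatPhi a.1 a.2).
  have [->|nz] := eqVneq (etaS hatPhi a.1 a.2) 0%N; first by rewrite mulr0n.
  by rewrite /c -expr2 exprVn sqrtCK -[LHS]mulr_natr mulVf ?pnatr_eq0.
rewrite big1 // => t _ /=.
case: (boolP ((t.1 == a.1) && _)) => [/andP[/eqP h1 h2]|]; last by rewrite rmorph0 mul0r.
case: (boolP ((t.1 == b.1) && _)) => [/andP[/eqP h3 h4]|]; last by rewrite mulr0.
exfalso; apply: ab; move: h2 h4; rewrite !inE -h1 -h3 => /eqP h5 /eqP h6.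
by case: a b h1 h3 h5 h6 {c} => [a1 a2] [b1 b2] /= -> -> <- <-.
Qed.
End Ket.


Section Chars.
Variables (A : finZmodType) (chi : A -> A -> algC).
Hypothesis chi_char : forall x, is_character (chi x).
Hypothesis chi_inj : forall x x', (forall y, chi x y = chi x' y) -> x = x'.
Hypothesis chi_mul : forall x x' y, chi x y * chi x' y = chi (x + x') y.

Lemma chi_x0 x : chi x 0 = 1.
Proof.
have [hm hn] := chi_char x.
have := hm 0 0; rewrite addr0 => h.
by apply: (mulfI (hn 0)); rewrite -h mulr1.
Qed.

Lemma chi_0y y : chi 0 y = 1.
Proof.
have := chi_mul 0 0 y; rewrite addr0 => h.
by apply: (mulfI (proj2 (chi_char 0) y)); rewrite h mulr1.
Qed.

Lemma mulrn_card (y : A) : y *+ #|A| = 0.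
Proof.
have : \sum_(z : A) z = \sum_(z : A) (z + y) := reindex_inj (addIr y).
rewrite big_split /= sumr_const.
move=> h; apply: (@addrI _ (\sum_(z : A) z)).
by rewrite addr0 {2}h.
Qed.

Lemma chi_natmul x y m : chi x (y *+ m) = chi x y ^+ m.
Proof.
elim: m => [|m IH]; first by rewrite mulr0n expr0 chi_x0.
by rewrite mulrS exprS (proj1 (chi_char x)) IH.
Qed.

Lemma card_A_gt0 : (0 < #|A|)%N.
Proof. by apply/card_gt0P; exists 0. Qed.

Lemma chi_norm x y : `|chi x y| = 1.
Proof.
have h : chi x y ^+ #|A| = 1 by rewrite -chi_natmul mulrn_card chi_x0.
apply/eqP; rewrite -(pexpr_eq1 card_A_gt0) ?normr_ge0 //.
by rewrite -normrX h normr1.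
Qed.

Lemma conj_chi x y : (chi x y)^* = chi (-x) y.
Proof.
apply: (mulfI (proj2 (chi_char x) y)).
by rewrite chi_mul addrN chi_0y -normCK chi_norm expr1n.
Qed.

Lemma sum_chi u : \sum_(j : A) chi u j = if u == 0 then #|A|%:R else 0.
Proof.
case: eqP => [->|un].
  by under eq_bigr => j _ do rewrite chi_0y; rewrite sumr_const.
case: (pickP (fun y => chi u y != 1)) => [y hy | h]; last first.
  exfalso; apply: un; apply: chi_inj => y; rewrite chi_0y.
  by have := h y => /= /negbFE /eqP.
have : \sum_(j : A) chi u j = (\sum_(j : A) chi u j) * chi u y.
  rewrite mulr_suml [LHS](reindex_inj (addIr y)) /=.
  by apply: eq_bigr => j _; rewrite (proj1 (chi_char u)).
set S := \sum_j chi u j.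
move/eqP; rewrite -subr_eq0 -{1}(mulr1 S) -mulrBr mulf_eq0 subr_eq0 eq_sym.
by rewrite eq_sym (eq_sym 1) (negbTE hy) orbF => /eqP.
Qed.

Lemma sum_chi2 w v :
  \sum_(j : A) chi w j * (chi v j)^* = if w == v then #|A|%:R else 0.
Proof.
under eq_bigr => j _ do rewrite conj_chi chi_mul.
by rewrite sum_chi subr_eq0.
Qed.

End Chars.


Lemma outer_sum m n (J : finType) (a b : J -> algC) (u : J -> 'M[algC]_(m,n)) :
  (\sum_w a w *: u w) *m adjmx (\sum_v b v *: u v) =
  \sum_w \sum_v (a w * (b v)^*) *: (u w *m adjmx (u v)).
Proof.
rewrite adjmx_sum mulmx_suml; apply: eq_bigr => w _.
rewrite mulmx_sumr; apply: eq_bigr => v _.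
by rewrite adjmxZ -scalemxAl -scalemxAr scalerA.
Qed.

Lemma inner_sum m n l (J : finType) (a b : J -> algC) (u : J -> 'M[algC]_(m,n))
   (u' : J -> 'M[algC]_(m,l)) :
  adjmx (\sum_w a w *: u w) *m (\sum_v b v *: u' v) =
  \sum_w \sum_v ((a w)^* * b v) *: (adjmx (u w) *m u' v).
Proof.
rewrite adjmx_sum mulmx_suml; apply: eq_bigr => w _.
rewrite mulmx_sumr; apply: eq_bigr => v _.
by rewrite adjmxZ -scalemxAl -scalemxAr scalerA.
Qed.

Lemma eta_sum (A : finZmodType) p k (hatPhi : 'I_p -> A -> A) (x : {ffun 'I_k -> A}) :
  (\sum_(w : A) etaS hatPhi x w = p ^ k)%N.
Proof.
have -> : (p ^ k = #|{ffun 'I_k -> 'I_p}|)%N by rewrite card_ffun !card_ord.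
rewrite -[RHS]sum1_card (partition_big (hatPhiT hatPhi x) xpredT) //=.
apply: eq_bigr => w _; by rewrite /etaS /Sset -sum1_card; apply: eq_bigl => b; rewrite inE.
Qed.

Section Gram.
Variables (A : finZmodType) (p k : nat) (hatPhi : 'I_p -> A -> A).
Lemma gram (x y : {ffun 'I_k -> A}) (al be : A -> algC) :
  adjmx (\sum_w al w *: ketS hatPhi x w) *m (\sum_v be v *: ketS hatPhi y v) =
  (if x == y then \sum_w (al w)^* * be w * (etaS hatPhi x w != 0%N)%:R else 0)%:M.
Proof.
rewrite inner_sum.
under eq_bigr => w _ do under eq_bigr => v _ do
  rewrite (ket_ortho hatPhi (x, w) (y, v)) /= xpair_eqE.
case: (boolP (x == y)) => [/eqP exy|xy]; first subst y.
  rewrite /= raddf_sum; apply: eq_bigr => w _.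
  rewrite (bigD1 w) //= eqxx big1 ?addr0 => [|v /negbTE]; last first.
    by rewrite eq_sym => -> /=; rewrite scale_scalar_mx mulr0 raddf0.
  by rewrite scale_scalar_mx.
rewrite /=.
rewrite raddf0; apply: big1 => w _; apply: big1 => v _.
by rewrite scaler0.
Qed.
End Gram.


Section Main.
Variables (A : finZmodType) (p k : nat) (chi : A -> A -> algC)
  (hatPhi : 'I_p -> A -> A).

Definition Uv (d : A) (x : {ffun 'I_k -> A}) : 'cV[algC]_#|Idx A p k| :=
  \sum_w (chi w d * sqrtC (etaS hatPhi x w)%:R) *: ketS hatPhi x w.
Definition Vv (d : A) (x : {ffun 'I_k -> A}) : 'cV[algC]_#|Idx A p k| :=
  \sum_w chi w d *: ketS hatPhi x w.

Lemma conj_sqrt_nat (m : nat) : (sqrtC (m%:R : algC))^* = sqrtC m%:R.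
Proof. by apply: conj_Creal; rewrite sqrtC_real // ler0n. Qed.

Lemma sigma_UU d : sigma k chi hatPhi d =
  ((ordG A p ^ k)%:R)^-1 *: \sum_x Uv d x *m adjmx (Uv d x).
Proof.
rewrite /sigma; congr (_ *: _); apply: eq_bigr => x _.
rewrite /Uv outer_sum; apply: eq_bigr => w _; apply: eq_bigr => v _.
congr (_ *: _); rewrite (rmorphM conjC) /= (conj_sqrt_nat (etaS hatPhi x v)) natrM sqrtCM ?nnegrE ?ler0n //.
by rewrite mulrACA.
Qed.

Lemma Emeas_VV d : Emeas k chi hatPhi d =
  (#|A|%:R)^-1 *: \sum_x Vv d x *m adjmx (Vv d x).
Proof.
rewrite /Emeas; congr (_ *: _); apply: eq_bigr => x _.
by rewrite /Vv outer_sum.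
Qed.

End Main.


Section Main2.
Variables (A : finZmodType) (p k : nat) (chi : A -> A -> algC)
  (hatPhi : 'I_p -> A -> A).
Hypothesis chi_char : forall x, is_character (chi x).
Hypothesis chi_inj : forall x x', (forall y, chi x y = chi x' y) -> x = x'.
Hypothesis chi_mul : forall x x' y, chi x y * chi x' y = chi (x + x') y.

Lemma sqrt_sq (m : nat) : sqrtC ((m * m)%N%:R : algC) = m%:R.
Proof. by rewrite natrM sqrtCM ?nnegrE ?ler0n // -expr2 sqrtCK. Qed.

Lemma claim1 : Sigma k chi hatPhi =
        (#|A|%:R / (ordG A p ^ k)%:R) *:
        \sum_(x : {ffun 'I_k -> A}) \sum_(w : A)
           (etaS hatPhi x w)%:R *: (ketS hatPhi x w *m adjmx (ketS hatPhi x w)).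
Proof.
rewrite /Sigma /sigma -scaler_sumr.
rewrite mulrC -scalerA; congr (_ *: _).
rewrite exchange_big scaler_sumr; apply: eq_bigr => x _.
rewrite exchange_big scaler_sumr; apply: eq_bigr => w _.
rewrite exchange_big (bigD1 w) //= [X in _ + X]big1 ?addr0 => [|v /negbTE wv].
  rewrite -scaler_suml -mulr_suml sum_chi2 // eqxx sqrt_sq.
  by rewrite scalerA.
by rewrite -scaler_suml -mulr_suml sum_chi2 // eq_sym wv mul0r scale0r.
Qed.

Lemma chi_conj_mul w d : (chi w d)^* * chi w d = 1.
Proof. by rewrite conj_chi // chi_mul addNr chi_0y. Qed.

Lemma gramUU d (x : {ffun 'I_k -> A}) : adjmx (Uv chi hatPhi d x) *m Uv chi hatPhi d x =
   (\sum_w (etaS hatPhi x w)%:R)%:M.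
Proof.
rewrite /Uv gram eqxx; congr (_%:M); apply: eq_bigr => w _.
rewrite (rmorphM conjC) /= conj_sqrt_nat mulrACA chi_conj_mul mul1r -expr2 sqrtCK.
by case: eqP => [->|]; rewrite ?mulr0 ?mulr1.
Qed.

Lemma quad_ge0 n (U : 'cV[algC]_n) (u : 'cV[algC]_n) :
  0 <= (adjmx u *m (U *m adjmx U) *m u) 0 0.
Proof.
rewrite mulmxA -mulmxA -[adjmx u *m U]adjmxK adjmxM adjmxK.
set z := adjmx U *m u.
rewrite mxE big_ord1 adjmx11 mxE eqxx mulr1n mulrC.
exact: mul_conjC_ge0.
Qed.

Hypothesis p_gt0 : (0 < p)%N.

Lemma ordG_neq0 : ((ordG A p ^ k)%:R : algC) != 0.
Proof.
by rewrite pnatr_eq0 expn_eq0 /ordG muln_eq0 negb_and negb_or -!lt0n p_gt0 card_A_gt0.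
Qed.

Lemma claim2 d : density_op (sigma k chi hatPhi d).
Proof.
have c_real : ((ordG A p ^ k)%:R : algC)^-1 \is Num.real by rewrite rpredV realn.
rewrite sigma_UU; split; first split.
- rewrite adjmxZ adjmx_sum conj_Creal //; congr (_ *: _); apply: eq_bigr => x _.
  by rewrite adjmxM adjmxK.
- move=> u; rewrite -scalemxAr -scalemxAl mxE mulmx_sumr mulmx_suml summxE.
  apply: mulr_ge0; first by rewrite invr_ge0 ler0n.
  by apply: sumr_ge0 => x _; apply: quad_ge0.
rewrite mxtraceZ raddf_sum /=.
under eq_bigr => x _ do rewrite mxtrace_mulC gramUU trace_mx11 mxE eqxx mulr1n
   -natr_sum eta_sum.
rewrite sumr_const card_ffun !card_ord -mulrnA -expnMn.
by rewrite mulVf //; exact: ordG_neq0.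
Qed.

Definition lamS (a : ({ffun 'I_k -> A} * A)%type) : algC :=
  #|A|%:R / (ordG A p ^ k)%:R * (etaS hatPhi a.1 a.2)%:R.
Definition eS (a : ({ffun 'I_k -> A} * A)%type) := ketS hatPhi a.1 a.2.

Lemma Sigma_fam : Sigma k chi hatPhi = fam eS lamS.
Proof.
rewrite claim1 /fam.
rewrite -(pair_bigA _ (fun x w => lamS (x,w) *: (eS (x,w) *m adjmx (eS (x,w))))).
rewrite scaler_sumr /=; apply: eq_bigr => x _.
by rewrite scaler_sumr; apply: eq_bigr => w _; rewrite scalerA.
Qed.

Lemma lamS_ge0 a : 0 <= lamS a.
Proof. by rewrite /lamS !mulr_ge0 ?invr_ge0 ?ler0n. Qed.

Lemma eS_ortho a b : adjmx (eS a) *m eS b =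
  (if a == b then (etaS hatPhi a.1 a.2 != 0%N)%:R else 0)%:M.
Proof. exact: ket_ortho. Qed.

Lemma eS_nze a : ~~ (etaS hatPhi a.1 a.2 != 0%N) -> eS a = 0.
Proof. by move/negbNE/eqP; apply: ket_eq0. Qed.

Lemma isr_real z : 0 <= z -> inv_sqrt_supp z \is Num.real.
Proof.
move=> z0; rewrite /inv_sqrt_supp; case: eqP => _; first by rewrite real0.
by rewrite rpredV sqrtC_real.
Qed.

Lemma claim3 j :
  pinv_sqrtmx (Sigma k chi hatPhi) *m sigma k chi hatPhi j
     *m pinv_sqrtmx (Sigma k chi hatPhi) = Emeas k chi hatPhi j.
Proof.
have PX : pinv_sqrtmx (Sigma k chi hatPhi) =
    fam eS (fun a => inv_sqrt_supp (lamS a)).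
  rewrite /pinv_sqrtmx Sigma_fam.
  apply: (fam_pinv eS_ortho eS_nze) => [a|]; last by rewrite /inv_sqrt_supp eqxx.
  by rewrite realE lamS_ge0.
rewrite PX; set X := fam eS _.
have Xadj : adjmx X = X.
  by apply: fam_adj => a; apply: isr_real; apply: lamS_ge0.
set c := ((ordG A p ^ k)%:R : algC)^-1.
have c0 : c != 0 by rewrite invr_eq0 ordG_neq0.
have Ac0 : 0 <= #|A|%:R * c by rewrite mulr_ge0 ?invr_ge0 ?ler0n.
set kap := (sqrtC (#|A|%:R * c))^-1.
have XU : forall x, X *m Uv chi hatPhi j x = kap *: Vv chi hatPhi j x.
  move=> x; rewrite /Uv /Vv mulmx_sumr scaler_sumr; apply: eq_bigr => w _.
  rewrite -scalemxAr (fam_e eS_ortho eS_nze _ (x, w)) /eS /= !scalerA.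
  have [e0|en0] := eqVneq (etaS hatPhi x w) 0%N.
    by rewrite ket_eq0 // !scaler0.
  congr (_ *: _); rewrite /lamS /inv_sqrt_supp /=.
  rewrite mulf_eq0 pnatr_eq0 (negbTE en0) orbF.
  have Ane0 : #|A|%:R / (ordG A p ^ k)%:R != 0 :> algC.
    by rewrite mulf_neq0 // ?pnatr_eq0 -?lt0n ?card_A_gt0 // invr_eq0 ordG_neq0.
  rewrite (negbTE Ane0) sqrtCM ?nnegrE ?ler0n // -/c /kap.
  have sn0 : sqrtC (etaS hatPhi x w)%:R != 0 :> algC by rewrite sqrtC_eq0 pnatr_eq0.
  rewrite invfM; field.
  by rewrite sn0 andbT sqrtC_eq0 mulf_neq0 // pnatr_eq0 -lt0n card_A_gt0.
rewrite sigma_UU Emeas_VV -scalemxAr -scalemxAl -/c.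
have -> : X *m (\sum_x Uv chi hatPhi j x *m adjmx (Uv chi hatPhi j x)) *m X =
    (kap * kap^*) *: \sum_x Vv chi hatPhi j x *m adjmx (Vv chi hatPhi j x).
  rewrite mulmx_sumr mulmx_suml scaler_sumr; apply: eq_bigr => x _.
  rewrite mulmxA -mulmxA -{2}Xadj -adjmxM XU adjmxZ -scalemxAl -scalemxAr scalerA.
  by rewrite mulrC.
rewrite scalerA; congr (_ *: _).
have kr : kap^* = kap by rewrite conj_Creal // rpredV sqrtC_real.
rewrite kr -expr2 exprVn sqrtCK invfM mulrCA mulfV // mulr1.
by [].
Qed.

Lemma gramVU d (x y : {ffun 'I_k -> A}) :
  adjmx (Vv chi hatPhi d x) *m Uv chi hatPhi d y =
  (if x == y then \sum_w sqrtC (etaS hatPhi x w)%:R else 0)%:M.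
Proof.
rewrite /Uv /Vv gram; case: (boolP (x == y)) => [/eqP exy|] //; subst y; congr (_%:M); apply: eq_bigr => w _.
rewrite mulrA chi_conj_mul mul1r.
by case: eqP => [->|]; rewrite ?sqrtC0 ?mulr0 ?mulr1.
Qed.

Lemma gramUV d (x y : {ffun 'I_k -> A}) :
  adjmx (Uv chi hatPhi d x) *m Vv chi hatPhi d y =
  (if x == y then \sum_w sqrtC (etaS hatPhi x w)%:R else 0)%:M.
Proof.
rewrite /Uv /Vv gram; case: (boolP (x == y)) => [/eqP exy|] //; subst y; congr (_%:M); apply: eq_bigr => w _.
rewrite (rmorphM conjC) /= conj_sqrt_nat [X in X * _]mulrAC chi_conj_mul mul1r.
by case: eqP => [->|]; rewrite ?sqrtC0 ?mulr0 ?mulr1.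
Qed.

Lemma claim4 d :
  \tr (Emeas k chi hatPhi d *m sigma k chi hatPhi d) =
        (p%:R / (ordG A p ^ k.+1)%:R) *
        \sum_(x : {ffun 'I_k -> A}) (\sum_(w : A) sqrtC (etaS hatPhi x w)%:R) ^+ 2.
Proof.
rewrite Emeas_VV sigma_UU -scalemxAl -scalemxAr !mxtraceZ.
rewrite mulmx_suml raddf_sum /=.
under eq_bigr => x _ do rewrite mulmx_sumr raddf_sum /=.
under eq_bigr => x _ do under eq_bigr => y _ do
  rewrite mulmxA -(mulmxA (Vv chi hatPhi d x)) gramVU mul_mx_scalar -scalemxAl
     mxtraceZ mxtrace_mulC gramUV trace_mx11 mxE eqxx mulr1n [y == x]eq_sym.
rewrite mulrA; congr (_ * _).
  rewrite expnS natrM /ordG natrM; field.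
  by rewrite -/(ordG A p) ordG_neq0 !pnatr_eq0 -!lt0n card_A_gt0 p_gt0.
apply: eq_bigr => x _; rewrite (bigD1 x) //= eqxx [X in _ + X]big1 ?addr0 ?expr2 //.
by move=> y; rewrite eq_sym => /negbTE ->; rewrite mul0r.
Qed.
End Main2.


Unset Implicit Arguments.
Set Strict Implicit.

Theorem mainTheorem6
  (A : finZmodType) (p : nat) (p_prime : prime p)
  (phi : A -> A)
  (phi_add : forall a b, phi (a + b) = phi a + phi b)
  (phi_bij : bijective phi)
  (phi_p : forall a, iter p phi a = a)
  (k : nat) (k_gt0 : (0 < k)%N)
  (chi : A -> A -> algC)
  (chi_char : forall x, is_character (chi x))
  (chi_all : forall f : A -> algC, is_character f -> exists x, forall y, chi x y = f y)
  (chi_inj : forall x x', (forall y, chi x y = chi x' y) -> x = x')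
  (chi_mul : forall x x' y, chi x y * chi x' y = chi (x + x') y)
  (chi_sym : forall x y, chi x y = chi y x)
  (hatPhi : 'I_p -> A -> A)
  (hatPhi_spec : forall (b : 'I_p) (x d : A),
      chi x (Phi phi b d) = chi (hatPhi b x) d) :
  [/\ Sigma k chi hatPhi =
        (#|A|%:R / (ordG A p ^ k)%:R) *:
        \sum_(x : {ffun 'I_k -> A}) \sum_(w : A)
           (etaS hatPhi x w)%:R *: (ketS hatPhi x w *m adjmx (ketS hatPhi x w)),
      forall d : A, density_op (sigma k chi hatPhi d),
      forall j : A,
        pinv_sqrtmx (Sigma k chi hatPhi) *m sigma k chi hatPhi j
          *m pinv_sqrtmx (Sigma k chi hatPhi) = Emeas k chi hatPhi j
    & forall d : A,
        \tr (Emeas k chi hatPhi d *m sigma k chi hatPhi d) =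
        (p%:R / (ordG A p ^ k.+1)%:R) *
        \sum_(x : {ffun 'I_k -> A}) (\sum_(w : A) sqrtC (etaS hatPhi x w)%:R) ^+ 2].
Proof.
have p_gt0 := prime_gt0 p_prime.
split.
- exact: claim1 chi_char chi_inj chi_mul.
- by move=> d; apply: claim2.
- by move=> j; apply: claim3.
- by move=> d; apply: claim4.
Qed.
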